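(* Let $\Phi=\{\varphi_j\}_{j=1}^n\subset\mathbb{C}^d$ be an equiangular tight frame which is triply covariant. Then $d=1$, $n=d$, or $n=d+1$. (That is, the only non-trivial triply covariant equiangular tight frames are orthonormal bases and simplices.)
   Context: A set $\Phi=\{\varphi_j\}_{j=1}^n\subset\mathbb{C}^d$ is an equiangular tight frame (ETF) if (1) for all $x\in\mathbb{C}^d$, $x=\frac{d}{n}\sum_{j=1}^n\langle x,\varphi_j\rangle\varphi_j$; (2) $\|\varphi_j\|=1$ for all $j$; (3) there is $\alpha\ge 0$ with $|\langle\varphi_j,\varphi_k\rangle|=\alpha$ for all $j\neq k$. Let $G$ be the group of unitary operators $U$ on $\mathbb{C}^d$ such that there is a permutation $\sigma$ of $\{1,\dots,n\}$ with $U\varphi_j\varphi_j^*U^*=\varphi_{\sigma(j)}\varphi_{\sigma(j)}^*$ for all $j$; the symmetry group of $\Phi$ is $G/S^1$ (i.e. $G$ modulo global unimodular phase factors), which acts on $\{1,\dots,n\}$ via these permutations. $\Phi$ is called $k$-covariant if this action is $k$-transitive, i.e. maps every ordered $k$-tuple of distinct indices to every ordered $k$-tuple of distinct indices; triply covariant means $3$-covariant. The triple product is $\mathrm{TP}(j,k,\ell)=\langle\varphi_j,\varphi_k\rangle\langle\varphi_k,\varphi_\ell\rangle\langle\varphi_\ell,\varphi_j\rangle$, and $\Phi$ is a simplex if all triple products of distinct indices are real and negative. *)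

(* Defs.v *)
From HB Require Import structures.
From mathcomp Require Import all_boot all_order all_algebra all_fingroup.
From mathcomp Require Import complex.
From mathcomp Require Import reals.
Set Implicit Arguments. Unset Strict Implicit. Unset Printing Implicit Defensive.
Import Order.TTheory GRing.Theory Num.Theory.
Local Open Scope ring_scope.

Section ETF.
Variable R : realType.
Local Notation C := (R[i]).

Definition adjmx (m k : nat) (A : 'M[C]_(m, k)) : 'M[C]_(k, m) :=
  (map_mx (fun z : C => z^*) A)^T.

(* <x, y> = sum_i x_i * conj(y_i)  (linear in the first argument) *)
Definition inner (d : nat) (x y : 'cV[C]_d) : C :=
  \sum_(i < d) x i 0 * (y i 0)^*.

Definition vnorm (d : nat) (x : 'cV[C]_d) : C := sqrtC (inner x x).

Definition is_ETF (d n : nat) (phi : 'I_n -> 'cV[C]_d) : Prop :=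
  [/\ (forall x : 'cV[C]_d,
         x = (d%:R / n%:R) *: \sum_(j < n) inner x (phi j) *: phi j),
      (forall j, vnorm (phi j) = 1) &
      (exists alpha : C, 0 <= alpha /\
         forall j k : 'I_n, j != k -> `|inner (phi j) (phi k)| = alpha)].

Definition unitary (d : nat) (U : 'M[C]_d) : Prop :=
  U *m adjmx U = 1%:M /\ adjmx U *m U = 1%:M.

Definition proj1mx (d : nat) (v : 'cV[C]_d) : 'M[C]_d := v *m adjmx v.

Definition symmetry_with (d n : nat) (phi : 'I_n -> 'cV[C]_d)
    (U : 'M[C]_d) (sigma : {perm 'I_n}) : Prop :=
  unitary U /\
  forall j, U *m proj1mx (phi j) *m adjmx U = proj1mx (phi (sigma j)).

(* The action of the symmetry group (G modulo phases, which does not change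
   the induced permutations) on {1..n} is 3-transitive: every ordered triple
   of distinct indices is mapped to every ordered triple of distinct indices. *)
Definition triply_covariant (d n : nat) (phi : 'I_n -> 'cV[C]_d) : Prop :=
  forall i1 i2 i3 j1 j2 j3 : 'I_n,
    i1 != i2 -> i1 != i3 -> i2 != i3 ->
    j1 != j2 -> j1 != j3 -> j2 != j3 ->
    exists U : 'M[C]_d, exists sigma : {perm 'I_n},
      symmetry_with phi U sigma /\
      [/\ sigma i1 = j1, sigma i2 = j2 & sigma i3 = j3].

End ETF.

(* Main.v *)
Require Import Defs.
From HB Require Import structures.
From mathcomp Require Import all_boot all_order all_algebra all_fingroup complex reals ring.
Set Implicit Arguments. Unset Strict Implicit. Unset Printing Implicit Defensive.
Import GRing.Theory Num.Theory.
Local Open Scope ring_scope.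
Lemma lincomb (K : comNzRingType) (x y a b k : K) :
  x - y = k * (a - b) -> a = b -> x = y.
Proof. by move=> h ab; apply/eqP; rewrite -subr_eq0 h ab subrr mulr0. Qed.

Lemma conj_aux (K : comNzRingType) (f : {rmorphism K -> K}) (c N A T : K) :
  f c = c -> f N = N -> f A = A -> c * (N - 2) * T = A * (1 - 2 * c) ->
  c * (N - 2) * f T = A * (1 - 2 * c).
Proof.
move=> hc hN hA E; have := congr1 f E.
by rewrite !rmorphM !rmorphB !rmorphM rmorph_nat rmorph1 hc hN hA.
Qed.

Lemma alg3 (K : numClosedFieldType) (N D A T : K) :
  N != 0 -> A != 0 -> A^* = A -> N^* = N -> D^* = D ->
  1 = D / N * (1 + (N - 1) * A) ->
  A = D / N * (2 * A + (N - 2) * T) ->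
  T * T^* = A ^+ 3 ->
  N ^+ 2 * ((D - 1) * (D - N + 1)) = 0.
Proof.
move=> N0 A0 cA cN cD E1 E2 TT.
set c := D / N in E1 E2.
have cc : c^* = c by rewrite /c -[in RHS]cD -[in RHS]cN rmorphM fmorphV.
have hD : D = c * N by rewrite /c mulrVK // unitfE.
have E3 : c * (N - 2) * T = A * (1 - 2 * c).
  by apply: (lincomb (k := -1) _ E2); ring.
have E4 : c * (N - 2) * T^* = A * (1 - 2 * c).
  exact: (conj_aux cc cN cA E3).
have E5 : A ^+ 2 * (c ^+ 2 * (N - 2) ^+ 2 * A) = A ^+ 2 * ((1 - 2 * c) ^+ 2).
  have -> : A ^+ 2 * (c ^+ 2 * (N - 2) ^+ 2 * A) = (c * (N - 2) * T) * (c * (N - 2) * T^*).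
    by apply: (lincomb (k := - c ^+ 2 * (N - 2) ^+ 2) _ TT); ring.
  by rewrite E3 E4; ring.
have h2 : c ^+ 2 * (N - 2) ^+ 2 * A = (1 - 2 * c) ^+ 2.
  by apply: (mulfI (expf_neq0 2 A0)).
have h1 : c * (N - 1) * A = 1 - c.
  by apply: (lincomb (k := -1) _ E1); ring.
rewrite hD.
have -> : N ^+ 2 * ((c * N - 1) * (c * N - N + 1)) =
  N ^+ 2 * ((N - 1) * ((1 - 2 * c) ^+ 2 - c ^+ 2 * (N - 2) ^+ 2 * A)
   + (N - 2) ^+ 2 * c * (c * (N - 1) * A - (1 - c))) by ring.
by rewrite h1 h2 !subrr; ring.
Qed.
Section H.
Variable R : realType.
Local Notation C := (R[i]).

Lemma inner_scale d (c : C) (v w : 'cV[C]_d) : inner (c *: v) w = c * inner v w.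
Proof. by rewrite /inner mulr_sumr; apply: eq_bigr => i _; rewrite mxE mulrA. Qed.

Lemma inner_sum d n (v : 'I_n -> 'cV[C]_d) w :
  inner (\sum_(j < n) v j) w = \sum_(j < n) inner (v j) w.
Proof.
rewrite /inner exchange_big; apply: eq_bigr => i _.
by rewrite summxE mulr_suml.
Qed.

Lemma inner_conj d (v w : 'cV[C]_d) : (inner v w)^* = inner w v.
Proof.
rewrite /inner rmorph_sum; apply: eq_bigr => i _.
by rewrite rmorphM /= conjCK mulrC.
Qed.

Lemma adj_mul d (v w : 'cV[C]_d) : adjmx v *m w = (inner w v)%:M.
Proof.
apply/matrixP => i j; rewrite !ord1 !mxE /inner.
by apply: eq_bigr => k _; rewrite !mxE mulrC.
Qed.

Lemma trQ d (a b c : 'cV[C]_d) :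
  \tr (proj1mx a *m proj1mx b *m proj1mx c) = inner b a * inner c b * inner a c.
Proof.
rewrite /proj1mx.
have -> : a *m adjmx a *m (b *m adjmx b) *m (c *m adjmx c) =
   a *m (adjmx a *m b) *m (adjmx b *m c) *m adjmx c by rewrite !mulmxA.
rewrite !adj_mul !mul_mx_scalar -!scalemxAl !mxtraceZ mxtrace_mulC adj_mul mxtrace_scalar.
by rewrite mulrA [inner c b * _]mulrC.
Qed.

Lemma trQ_inv d n (phi : 'I_n -> 'cV[C]_d) U (s : {perm 'I_n}) a b c :
  symmetry_with phi U s ->
  \tr (proj1mx (phi (s a)) *m proj1mx (phi (s b)) *m proj1mx (phi (s c))) =
  \tr (proj1mx (phi a) *m proj1mx (phi b) *m proj1mx (phi c)).
Proof.
case=> [[_ hU] hs]; rewrite -!hs.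
have -> : U *m proj1mx (phi a) *m adjmx U *m (U *m proj1mx (phi b) *m adjmx U)
   *m (U *m proj1mx (phi c) *m adjmx U) =
   U *m (proj1mx (phi a) *m (adjmx U *m U) *m proj1mx (phi b) *m (adjmx U *m U)
   *m proj1mx (phi c)) *m adjmx U by rewrite !mulmxA.
rewrite hU !mulmx1 mxtrace_mulC !mulmxA hU mul1mx.
by [].
Qed.


Lemma natr_pred n : (0 < n)%N -> (n.-1)%:R = n%:R - 1 :> C.
Proof. by case: n => // n _; rewrite mulrSr addrK. Qed.

Lemma nat_eqC (a b : nat) : (a%:R : C) = b%:R -> a = b.
Proof. by move/eqP; rewrite eqr_nat => /eqP. Qed.

Theorem main (d n : nat) (phi : 'I_n -> 'cV[C]_d) :
  is_ETF phi -> triply_covariant phi ->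
  [\/ d = 1%N, n = d | n = d.+1].
Proof.
move=> [F Hn [al [al0 Hal]]] Hcov.
have [n0|n_gt0] := posnP n.
  subst n; clear Hn Hal Hcov; case: d phi F => [|d'] phi F; first by apply: Or32.
  have := F (const_mx 1); rewrite big_ord0 scaler0 => /matrixP /(_ ord0 ord0).
  by rewrite !mxE => /eqP; rewrite oner_eq0.
set c : C := d%:R / n%:R in F.
set A : C := al ^+ 2.
have Nn0 : (n%:R : C) != 0 by rewrite pnatr_eq0 -lt0n.
have Hii j : inner (phi j) (phi j) = 1.
  by have := Hn j; rewrite /vnorm => h; rewrite -[inner _ _]sqrtCK h expr1n.
have Hjk j k : j != k -> inner (phi j) (phi k) * inner (phi k) (phi j) = A.
  by move=> h; rewrite -(inner_conj (phi j)) -normCK (Hal j k h).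
have HF k l : inner (phi k) (phi l) =
    c * \sum_(j < n) inner (phi k) (phi j) * inner (phi j) (phi l).
  rewrite {1}(F (phi k)) inner_scale inner_sum; congr (_ * _).
  by apply: eq_bigr => j _; rewrite inner_scale.
have HsumC (k : 'I_n) (x : C) : \sum_(j | j != k) x = x * (n%:R - 1).
  rewrite -natr_pred // mulr_natr -[in RHS](card_ord n) -(cardC1 k) -sumr_const.
  by apply: eq_bigl => j; rewrite inE.
pose k0 : 'I_n := Ordinal n_gt0.
have E1 : 1 = c * (1 + (n%:R - 1) * A).
  rewrite -{1}(Hii k0) HF (bigD1 k0) //= Hii mulr1.
  rewrite (eq_bigr (fun _ => A)); last by move=> j hj; rewrite Hjk // eq_sym.
  by rewrite HsumC [A * _]mulrC.
have cD : c * n%:R = d%:R by rewrite /c mulrVK // unitfE.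
have E1' : A = 0 -> n = d.
  move=> A0; move: E1; rewrite A0 mulr0 addr0 mulr1 => c1.
  by apply: nat_eqC; rewrite -cD -c1 mul1r.
have [n1|n_gt1] := leqP n 1.
  have n1' : n = 1%N by apply/eqP; rewrite eqn_leq n1 n_gt0.
  apply: Or31; apply: nat_eqC; rewrite -cD.
  move: E1; rewrite n1' subrr mul0r addr0 mulr1 => <-.
  by [].
pose l1 : 'I_n := Ordinal n_gt1.
have kl : k0 != l1 by [].
pose t j := inner (phi k0) (phi j) * inner (phi j) (phi l1) * inner (phi l1) (phi k0).
have E2g : A = c * (A + (A + \sum_(j | (j != k0) && (j != l1)) t j)).
  rewrite -{1}(Hjk k0 l1 kl) {1}HF -mulrA mulr_suml (bigD1 k0) //= (bigD1 l1) //=.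
  rewrite Hii mul1r (Hjk _ _ kl) Hii mulr1 (Hjk _ _ kl).
  by congr (_ * (_ + (_ + _))); apply: eq_bigl => j; rewrite andbA.
have [n2|n_gt2] := leqP n 2.
  have n2' : n = 2%N by apply/eqP; rewrite eqn_leq n2 n_gt1.
  move: E2g; rewrite big_pred0; last first.
    move=> j; apply/negP => /andP [] /eqP h1 /eqP h2.
    have := leq_trans (ltn_ord j) n2.
    by case: j h1 h2 => [[|[|m]]] //= hm h1 h2 _; [apply: h1 | apply: h2]; apply: val_inj.
  rewrite addr0 => E2.
  have [A0|A0] := eqVneq A 0; first by apply: Or32; apply: E1'.
  apply: Or31; apply: nat_eqC; rewrite -cD n2'.
  apply: (mulIf A0); rewrite mul1r {2}E2; ring.
pose j2 : 'I_n := Ordinal n_gt2.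
pose T := t j2.
have Ht j : j != k0 -> j != l1 -> t j = T.
  move=> jk jl.
  have lk : l1 != k0 by rewrite eq_sym.
  have lj : l1 != j by rewrite eq_sym.
  have l2 : l1 != j2 by [].
  have k2 : j2 != k0 by [].
  have [U [s [Hs [s1 s2 s3]]]] := Hcov l1 j k0 l1 j2 k0 lj lk jk l2 lk k2.
  have := @trQ_inv d n phi U s l1 j k0 Hs; rewrite s1 s2 s3 !trQ => h.
  rewrite /T /t; move: h; rewrite -!mulrA => h.
  by rewrite !mulrA [X in X * _ = _]mulrC [X in _ = X * _]mulrC -!mulrA h.
have HS : \sum_(j | (j != k0) && (j != l1)) t j = T * (n%:R - 1) - T.
  rewrite (eq_bigr (fun _ => T)); last by move=> j /andP [h1 h2]; apply: Ht.
  by rewrite -(HsumC k0 T) [in RHS](bigD1 l1) //= [RHS]addrC addKr.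
have E2 : A = c * (2 * A + (n%:R - 2) * T).
  by rewrite {1}E2g HS; ring.
have TT : T * T^* = A ^+ 3.
  by rewrite -normCK /T /t !normrM !Hal // /A; ring.
have [A0|A0] := eqVneq A 0; first by apply: Or32; apply: E1'.
have := alg3 Nn0 A0 (geC0_conj (exprn_ge0 2 al0)) (conjC_nat _ _) (conjC_nat _ _) E1 E2 TT.
move/eqP; rewrite mulf_eq0 expf_eq0 (negPf Nn0) andbF /= mulf_eq0 => /orP [] /eqP h.
  by apply: Or31; apply: nat_eqC; apply/eqP; rewrite -subr_eq0; apply/eqP; exact: h.
apply: Or33; apply: nat_eqC; rewrite -natr1; apply/eqP; rewrite -subr_eq0 -oppr_eq0.
by apply/eqP; rewrite -h; ring.
Qed.

End H.

Theorem mainTheorem1 (R : realType) (d n : nat) (phi : 'I_n -> 'cV[R[i]]_d) :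
  is_ETF phi -> triply_covariant phi ->
  [\/ d = 1%N, n = d | n = d.+1].
Proof. exact: main. Qed.
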